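(* Let $A_n=1$ if $n=2^{k+1}-2$ for some integer $k\ge 0$ and $A_n=0$ otherwise, and let $D(n)=\det\left(A_{i+j}\right)_{i,j=0}^{n-1}$ for $n\ge 1$, $D(0)=1$. For $n\ge 0$ with binary expansion $n=[\varepsilon_k\cdots\varepsilon_1\varepsilon_0]_2$ (digits $\varepsilon_i\in\{0,1\}$, with $\varepsilon_i=0$ for $i>k$), let $\delta(n)$ be the number of indices $i\ge 1$ with $\varepsilon_{i+1}\varepsilon_i=10$ (i.e. $\varepsilon_{i+1}=1,\varepsilon_i=0$), plus $1$ if $\varepsilon_1\varepsilon_0=11$ (i.e. $\varepsilon_1=\varepsilon_0=1$). Then for all $n\ge 0$, $$D(n)=(-1)^{\delta(n)}.$$
   Context: Equivalently $A_n=a_{n+1}$ where $a_m=1$ if $m+1$ is a power of $2$ and $a_m=0$ otherwise. For example $\delta(3)=1$, $\delta(4)=1$, $\delta(6)=0$, $\delta(15)=1$. *)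

(* Defs.v *)
From mathcomp Require Import all_boot all_order all_algebra.
Set Implicit Arguments. Unset Strict Implicit. Unset Printing Implicit Defensive.
Import GRing.Theory Num.Theory.

(* A n = 1 if n = 2^(k+1) - 2 for some k >= 0, else 0.  Any such k satisfies
   k <= n (since 2^(k+1) - 2 >= k), so the search over k in [0, n] (iota 0 n.+1) is exhaustive. *)
Definition is_A (n : nat) : bool :=
  has (fun k => n == 2 ^ k.+1 - 2) (iota 0 n.+1).

Definition A (n : nat) : int := if is_A n then 1%R else 0%R.

(* Hankel determinant D(n) = det (A_{i+j})_{i,j=0}^{n-1}; for n = 0 the
   determinant of the empty matrix is 1, matching D(0) = 1. *)
Definition D (n : nat) : int := \det (\matrix_(i < n, j < n) A (i + j)).

Definition bit (i n : nat) : bool := odd (n %/ 2 ^ i).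

(* delta n = #{ i >= 1 : eps_{i+1} = 1, eps_i = 0 } + [eps_1 = eps_0 = 1].
   Digits eps_i vanish for i > n, so indices i in [1, n] cover all
   possible occurrences. *)
Definition delta (n : nat) : nat :=
  (\sum_(1 <= i < n.+1) (bit i.+1 n && ~~ bit i n)) + (bit 1 n && bit 0 n).

(* Main.v *)
Require Import Defs.
From mathcomp Require Import all_boot all_order all_algebra zify.
From mathcomp Require Import fingroup perm.
Import GRing.Theory Num.Theory.
Local Open Scope ring_scope.

Definition unsh p q (i : 'I_(p + q)) : 'I_(p + q) :=
  insubd i (if (i < p)%N then 2 * i else 2 * (i - p) + 1)%N.

Lemma unsh_l p q (a : 'I_p) : (q <= p <= q.+1)%N -> val (unsh p q (lshift q a)) = (2 * a)%N.
Proof.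
move=> h; rewrite /unsh val_insubd /= ltn_ord.
have := ltn_ord a; case: ifP => //; lia.
Qed.

Lemma unsh_r p q (b : 'I_q) : (q <= p <= q.+1)%N -> val (unsh p q (rshift p b)) = (2 * b + 1)%N.
Proof.
move=> h; rewrite /unsh val_insubd /=.
have := ltn_ord b; have -> : (p + b < p = false)%N by lia.
rewrite addKn; case: ifP => //; lia.
Qed.

Lemma unsh_inj p q : (q <= p <= q.+1)%N -> injective (@unsh p q).
Proof.
move=> h i j; rewrite -[i]splitK -[j]splitK.
case: (split i) => a; case: (split j) => b /= /(congr1 val);
  rewrite ?unsh_l ?unsh_r // => e; apply/val_inj => /=; lia.
Qed.
Lemma is_AP n : reflect (exists k, n = 2 ^ k.+1 - 2)%N (is_A n).
Proof.
apply: (iffP hasP) => [[k _ /eqP ->]|[k ->]]; first by exists k.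
exists k => //; rewrite mem_iota add0n.
have h : (k.+1 < 2 ^ k.+1)%N by apply: ltn_expl.
apply/andP; split => //; lia.
Qed.

Lemma A0 : A 0 = 1.
Proof. by rewrite /A; case: is_AP => // -[]; exists 0%N. Qed.

Lemma Aodd m : A (2 * m + 1) = 0.
Proof.
rewrite /A; case: is_AP => // -[k]; rewrite expnS.
have : (0 < 2 ^ k)%N by rewrite expn_gt0. lia.
Qed.

Lemma Ass m : A (2 * m + 2) = A m.
Proof.
rewrite /A; case: is_AP => [[k hk]|hn]; case: is_AP => [[k' hk']|hn'] //.
- case: hn'; case: k hk => [|k]; first by rewrite /=; lia.
  exists k; move: hk; rewrite !expnS.
  have : (0 < 2 ^ k)%N by rewrite expn_gt0. lia.
- case: hn; exists k'.+1; move: hk'; rewrite !expnS.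
  have : (0 < 2 ^ k')%N by rewrite expn_gt0. lia.
Qed.

Lemma Beven m : A (2 * (2 * m)) = if m == 0%N then 1 else 0.
Proof.
case: m => [|m]; first by rewrite A0.
have -> : (2 * (2 * m.+1) = 2 * (2 * m + 1) + 2)%N by lia.
by rewrite Ass Aodd.
Qed.

Lemma Bodd m : A (2 * (2 * m + 1)) = A (2 * m).
Proof. have -> : (2 * (2 * m + 1) = 2 * (2 * m) + 2)%N by lia. by rewrite Ass. Qed.
Lemma det_conj_inj n (g : 'I_n -> 'I_n) (H : 'M[int]_n) : injective g ->
  \det (\matrix_(i, j) H (g i) (g j)) = \det H.
Proof.
move=> ig; set s := perm ig.
have -> : \matrix_(i, j) H (g i) (g j) = row_perm s (col_perm s H).
  by apply/matrixP => i j; rewrite !mxE !permE.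
rewrite row_permE col_permE !det_mulmx !det_perm odd_permV.
by rewrite mulrCA -expr2 sqrr_sign mulr1.
Qed.

Lemma det_swap p : \det (block_mx 0 1%:M 1%:M 0 : 'M[int]_(p + p)) = (-1) ^+ p.
Proof.
have -> : (block_mx 0 1%:M 1%:M 0 : 'M[int]_(p + p)) =
  block_mx 1%:M 1%:M 0 1%:M *m block_mx 1%:M 0 (-1%:M) 1%:M *m
  block_mx 1%:M 1%:M 0 1%:M *m block_mx (-1%:M) 0 0 1%:M.
  rewrite !mulmx_block !(mul1mx, mulmx1, mul0mx, mulmx0, add0r, addr0, mulNmx, mulmxN).
  by rewrite subrr addNr add0r oppr0 opprK.
rewrite !det_mulmx [X in X * _ * _ * _]det_ublock [X in _ * X * _ * _]det_lblock [X in _ * X * _]det_ublock [X in _ * X]det_ublock !det1 -(raddfN (@scalar_mx _ p)) det_scalar.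
by rewrite !mul1r mulr1.
Qed.

Lemma det_blk0 p (X M N : 'M[int]_p) :
  \det (block_mx X M N 0) = (-1) ^+ p * \det M * \det N.
Proof.
have h : block_mx X M N 0 *m block_mx 0 1%:M 1%:M 0 = block_mx M X 0 N.
  by rewrite mulmx_block !(mul1mx, mulmx1, mul0mx, mulmx0, add0r, addr0).
have := congr1 determinant h; rewrite det_mulmx det_swap det_ublock => e.
by rewrite -mulrA -e mulrCA -expr2 sqrr_sign mulr1.
Qed.

Lemma det_0blk p (M N Y : 'M[int]_p) :
  \det (block_mx 0 M N Y) = (-1) ^+ p * \det M * \det N.
Proof.
have h : block_mx 0 M N Y *m block_mx 0 1%:M 1%:M 0 = block_mx M 0 Y N.
  by rewrite mulmx_block !(mul1mx, mulmx1, mul0mx, mulmx0, add0r, addr0).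
have := congr1 determinant h; rewrite det_mulmx det_swap det_lblock => e.
by rewrite -mulrA -e mulrCA -expr2 sqrr_sign mulr1.
Qed.

Lemma det_schur1 k (u : 'M[int]_(1, k)) (v : 'M[int]_(k, 1)) (K : 'M[int]_k) :
  \det (block_mx 1%:M u v K) = \det (K - v *m u).
Proof.
have h : block_mx 1%:M 0 v 1%:M *m block_mx 1%:M u 0 (K - v *m u) = block_mx 1%:M u v K.
  rewrite mulmx_block !(mul1mx, mulmx1, mul0mx, mulmx0, add0r, addr0).
  by rewrite addrC subrK.
by rewrite -h det_mulmx det_lblock det_ublock !det1 !mul1r.
Qed.

Definition E (k : nat) : int := \det (\matrix_(i < k, j < k) A (2 * (i + j))).

Lemma R1 p q : (q <= p <= q.+1)%N -> D (p + q) = E p * D q.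
Proof.
move=> h; rewrite /D -(@det_conj_inj _ _ _ (@unsh_inj p q h)).
rewrite (_ : \matrix_(i, j) _ = block_mx (\matrix_(i < p, j < p) A (2 * (i + j))) 0 0
           (\matrix_(i < q, j < q) A (i + j))) ?det_ublock //.
apply/matrixP => i j; rewrite -[i]splitK -[j]splitK.
case: (split i) => a; case: (split j) => b /=;
  rewrite ?block_mxEul ?block_mxEur ?block_mxEdl ?block_mxEdr !mxE ?unsh_l ?unsh_r //.
- by congr A; lia.
- by rewrite (_ : (2 * a + (2 * b + 1) = 2 * (a + b) + 1)%N) ?Aodd //; lia.
- by rewrite (_ : (2 * a + 1 + 2 * b = 2 * (a + b) + 1)%N) ?Aodd //; lia.
- by rewrite (_ : (2 * a + 1 + (2 * b + 1) = 2 * (a + b) + 2)%N) ?Ass //; lia.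
Qed.

Lemma R2 q : E (q + q) = (-1) ^+ q * E q * E q.
Proof.
have h : (q <= q <= q.+1)%N by rewrite leqnn leqnSn.
rewrite /E -(@det_conj_inj _ _ _ (@unsh_inj q q h)).
rewrite (_ : \matrix_(i, j) _ = block_mx (\matrix_(i < q, j < q) A (2 * (2 * (i + j))))
           (\matrix_(i < q, j < q) A (2 * (i + j)))
           (\matrix_(i < q, j < q) A (2 * (i + j))) 0) ?det_blk0 //.
apply/matrixP => i j; rewrite -[i]splitK -[j]splitK.
case: (split i) => a; case: (split j) => b /=;
  rewrite ?block_mxEul ?block_mxEur ?block_mxEdl ?block_mxEdr !mxE ?unsh_l ?unsh_r //.
- by congr A; lia.
- by rewrite (_ : (2 * (2 * a + (2 * b + 1)) = 2 * (2 * (a + b) + 1))%N) ?Bodd //; lia.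
- by rewrite (_ : (2 * (2 * a + 1 + 2 * b) = 2 * (2 * (a + b) + 1))%N) ?Bodd //; lia.
- by rewrite (_ : (2 * (2 * a + 1 + (2 * b + 1)) = 2 * (2 * (a + b).+1))%N) ?Beven //; lia.
Qed.

Definition g3 {q} (i : 'I_(1 + (q + q))) : 'I_(1 + (q + q)) :=
  insubd i (if val i == 0 then 0 else if (i - 1 < q)%N then 2 * (i - 1) + 2 else 2 * (i - 1 - q) + 1)%N.

Lemma g3_0 q (a : 'I_1) : val (g3 (lshift (q + q) a)) = 0%N.
Proof. by rewrite /g3 val_insubd /= (ord1 a). Qed.

Lemma g3_l q (a : 'I_q) : val (g3 (rshift 1 (lshift q a))) = (2 * a + 2)%N.
Proof.
rewrite /g3 val_insubd /= add1n subn1 /= ltn_ord.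
have := ltn_ord a; case: ifP => //; lia.
Qed.

Lemma g3_r q (b : 'I_q) : val (g3 (rshift 1 (rshift q b))) = (2 * b + 1)%N.
Proof.
rewrite /g3 val_insubd /= add1n subn1 /=.
have := ltn_ord b; have -> : (q + b < q = false)%N by lia.
rewrite addKn; case: ifP => //; lia.
Qed.

Lemma g3_inj q : injective (g3 (q:=q)).
Proof.
move=> i j; rewrite -[i]splitK -[j]splitK.
case: (split i) => [a|i']; case: (split j) => [b|j'] /=.
- by rewrite (ord1 a) (ord1 b).
- rewrite -[j']splitK; case: (split j') => b /= /(congr1 val); rewrite g3_0 ?g3_l ?g3_r; lia.
- rewrite -[i']splitK; case: (split i') => a /= /(congr1 val); rewrite g3_0 ?g3_l ?g3_r; lia.
rewrite -[i']splitK -[j']splitK; case: (split i') => a; case: (split j') => b /= /(congr1 val);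
  rewrite ?g3_l ?g3_r => e; apply/val_inj => /=; lia.
Qed.

Lemma R3 q : E (1 + (q + q)) = (-1) ^+ q * D q * D q.
Proof.
rewrite /E -(@det_conj_inj _ _ _ (g3_inj q)).
pose w : 'M[int]_(1, q) := \row_(b < q) A (2 * b).
pose M : 'M[int]_q := \matrix_(i < q, j < q) A (i + j).
have -> : \matrix_(i, j) (\matrix_(i0 < 1 + (q + q), j0 < 1 + (q + q)) A (2 * (i0 + j0))) (g3 i) (g3 j) =
   block_mx (1%:M : 'M[int]_1) (row_mx (0 : 'M[int]_(1, q)) w) (col_mx (0 : 'M[int]_(q, 1)) w^T)
           (block_mx (0 : 'M[int]_q) M M 0).
  apply/matrixP => i j; rewrite -[i]splitK -[j]splitK.
  case: (split i) => [a|i']; case: (split j) => [b|j'] /=.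
  - by rewrite block_mxEul !mxE !g3_0 (ord1 a) (ord1 b) A0.
  - rewrite -[j']splitK; case: (split j') => b /=; rewrite block_mxEur ?(row_mxEl, row_mxEr) !mxE g3_0 ?g3_l ?g3_r.
    + by rewrite (_ : (2 * (0 + (2 * b + 2)) = 2 * (2 * b.+1))%N) ?Beven //; lia.
    + by rewrite add0n Bodd.
  - rewrite -[i']splitK; case: (split i') => a /=; rewrite block_mxEdl ?(col_mxEu, col_mxEd) !mxE g3_0 ?g3_l ?g3_r.
    + by rewrite (_ : (2 * (2 * a + 2 + 0) = 2 * (2 * a.+1))%N) ?Beven //; lia.
    + by rewrite addn0 Bodd.
  rewrite -[i']splitK -[j']splitK; case: (split i') => a; case: (split j') => b /=; rewrite block_mxEdr
    ?block_mxEul ?block_mxEur ?block_mxEdl ?block_mxEdr !mxE ?g3_l ?g3_r.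
  - by rewrite (_ : (2 * (2 * a + 2 + (2 * b + 2)) = 2 * (2 * (a + b).+2))%N) ?Beven //; lia.
  - rewrite (_ : (2 * (2 * a + 2 + (2 * b + 1)) = 2 * (2 * (a + b).+1 + 1))%N); last lia.
    by rewrite Bodd (_ : (2 * (a + b).+1 = 2 * (a + b) + 2)%N) ?Ass //; lia.
  - rewrite (_ : (2 * (2 * a + 1 + (2 * b + 2)) = 2 * (2 * (a + b).+1 + 1))%N); last lia.
    by rewrite Bodd (_ : (2 * (a + b).+1 = 2 * (a + b) + 2)%N) ?Ass //; lia.
  - by rewrite (_ : (2 * (2 * a + 1 + (2 * b + 1)) = 2 * (2 * (a + b).+1))%N) ?Beven //; lia.
rewrite det_schur1 mul_col_row !(mul0mx, mulmx0) opp_block_mx add_block_mx.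
rewrite !(oppr0, addr0, add0r) det_0blk.
by [].
Qed.
Section DeltaRec.
Local Open Scope nat_scope.

Definition cc i n := (bit i.+1 n && ~~ bit i n) : nat.
Definition SS N n := \sum_(1 <= i < N) cc i n.

Lemma bit_big i n : n < 2 ^ i -> bit i n = false.
Proof. by move=> h; rewrite /bit divn_small. Qed.

Lemma bit_half i n : bit i (n %/ 2) = bit i.+1 n.
Proof. by rewrite /bit expnS divnMA. Qed.

Lemma SS_ext n k : SS (n.+1 + k) n = SS n.+1 n.
Proof.
elim: k => [|k IH]; first by rewrite addn0.
rewrite addnS /SS big_nat_recr /=; last by lia.
rewrite -/(SS _ _) IH /cc bit_big ?addn0 //.
apply: (leq_ltn_trans _ (ltn_expl _ (isT : 1 < 2))); lia.
Qed.

Lemma delta_SS n k : delta n = SS (n.+1 + k) n + (bit 1 n && bit 0 n).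
Proof. by rewrite SS_ext. Qed.

Lemma SS_shift n : SS (n.+2) n = cc 1 n + SS n.+1 (n %/ 2).
Proof.
rewrite /SS big_ltn // big_add1 /=; congr (_ + _).
by apply: eq_bigr => i _; rewrite /cc !bit_half.
Qed.

Lemma odd_eq x y k : x = k * 2 + y -> odd x = odd y.
Proof. by move->; rewrite oddD oddM andbF. Qed.

Lemma delta_par n : odd (delta n) = odd ((n.+1) %/ 4 + delta (n %/ 2)).
Proof.
rewrite (delta_SS n 1) (delta_SS (n %/ 2) (n - n %/ 2)).
have -> : (n %/ 2).+1 + (n - n %/ 2) = n.+1 by lia.
rewrite addn1 SS_shift /cc !bit_half.
have b0 : bit 0 n = odd (n %% 8).
  by rewrite /bit expn0 divn1; apply: (@odd_eq _ _ (n %/ 8 * 4)); lia.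
have b1 : bit 1 n = odd ((n %% 8) %/ 2).
  by rewrite /bit expn1; apply: (@odd_eq _ _ (n %/ 8 * 2)); lia.
have b2 : bit 2 n = odd ((n %% 8) %/ 4).
  by rewrite /bit (_ : 2 ^ 2 = 4) //; apply: (@odd_eq _ _ (n %/ 8)); lia.
have b3 : odd ((n.+1) %/ 4) = odd (((n %% 8).+1) %/ 4).
  by apply: (@odd_eq _ _ (n %/ 8)); lia.
rewrite !oddD b0 b1 b2 b3.
have : n %% 8 < 8 by rewrite ltn_pmod.
move: (n %% 8) => r.
set X := odd (SS _ _).
by case: r => [|[|[|[|[|[|[|[|r]]]]]]]] //= _; case: X.
Qed.

End DeltaRec.

Lemma delta_rec n : (-1) ^+ delta n = (-1) ^+ ((n.+1) %/ 4) * (-1) ^+ delta (n %/ 2) :> int.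
Proof. by rewrite -exprD -signr_odd delta_par signr_odd. Qed.

Lemma sq_sign k (x : int) : x * (-1) ^+ k * (-1) ^+ k = x.
Proof. by rewrite -mulrA -expr2 sqrr_sign mulr1. Qed.

Lemma main n : D n = (-1) ^+ delta n /\ E n = (-1) ^+ (n %/ 2).
Proof.
elim/ltn_ind: n => n IH.
have HE : E n = (-1) ^+ (n %/ 2).
  case: n IH => [|n] IH; first by rewrite /E det_mx00.
  set q := (n.+1 %/ 2)%N.
  have [h|h] : (n.+1 %% 2 = 0 \/ n.+1 %% 2 = 1)%N by lia.
  - have -> : n.+1 = (q + q)%N by rewrite /q; lia.
    rewrite R2 (proj2 (IH q _)); last by rewrite /q; lia.
    rewrite sq_sign; congr (_ ^+ _); rewrite /q; lia.
  - have -> : n.+1 = (1 + (q + q))%N by rewrite /q; lia.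
    rewrite R3 (proj1 (IH q _)); last by rewrite /q; lia.
    rewrite sq_sign; congr (_ ^+ _); rewrite /q; lia.
split => //.
case: n IH HE => [|n] IH HE.
  by rewrite /D det_mx00 /delta big_geq.
set q := (n.+1 %/ 2)%N; set p := (n.+1 - q)%N.
have hpq : (q <= p <= q.+1)%N by rewrite /p /q; lia.
rewrite [in LHS](_ : n.+1 = p + q)%N; last by rewrite /p /q; lia.
rewrite R1 // delta_rec (proj1 (IH q _)); last by rewrite /q; lia.
have -> : E p = (-1) ^+ (n.+2 %/ 4).
  have [e|lt] : p = n.+1 \/ (p < n.+1)%N by rewrite /p /q; lia.
  - by rewrite e HE; congr (_ ^+ _); lia.
  - by rewrite (proj2 (IH p lt)); congr (_ ^+ _); rewrite /p /q; lia.
by [].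
Qed.

Theorem corollary2p4 (n : nat) : D n = (-1) ^+ delta n.
Proof. exact: (proj1 (main n)). Qed.
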